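(* Fix integers $m\in\mathbb{N}$ and $j$ with $m\le j\le 2m$. Let $\mathcal{A}_j$ be the set of all tuples $(\alpha_1,\dots,\alpha_j)\in\{1,\dots,2m\}^j$ with $\alpha_1+\cdots+\alpha_j=2m$ such that exactly $2m-j$ of the $\alpha_\nu$ equal $2$ and the remaining $2(j-m)$ of the $\alpha_\nu$ equal $1$; let $\mathcal{A}_j^c$ be the set of tuples $(\alpha_1,\dots,\alpha_j)\in\{1,\dots,2m\}^j$ with $\alpha_1+\cdots+\alpha_j=2m$ that are not in $\mathcal{A}_j$. For such a tuple define $$S_n(\alpha_1,\dots,\alpha_j)=\frac{1}{n^m}\sum_{\substack{(i_1,\dots,i_j)\in\{1,\dots,n\}^j\\ i_1,\dots,i_j\text{ pairwise distinct}}}\cos\Big(\frac{2\pi i_1}{n}\Big)^{\alpha_1}\cdots\cos\Big(\frac{2\pi i_j}{n}\Big)^{\alpha_j}.$$ Then, as $n\to\infty$, for $(\alpha_1,\dots,\alpha_j)\in\mathcal{A}_j$, $$S_n(\alpha_1,\dots,\alpha_j)=(-1)^{j-m}\frac{(2(j-m))!}{2^j\,(j-m)!}\Big(1+\mathcal{O}\Big(\frac1n\Big)\Big),$$ and for $(\alpha_1,\dots,\alpha_j)\in\mathcal{A}_j^c$, $$S_n(\alpha_1,\dots,\alpha_j)=\mathcal{O}\Big(\frac1n\Big).$$ *)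

(* Defs.v *)
From HB Require Import structures.
From Stdlib Require Import Reals.
From mathcomp Require Import all_boot all_order all_algebra.
From mathcomp Require Import Rstruct.
Unset Printing Implicit Defensive.
Import Order.TTheory GRing.Theory Num.Theory.
Local Open Scope ring_scope.

(* Indices 1..n are encoded by i : 'I_n via i.+1; indices nu = 1..j via 'I_j. *)

Definition admissible (m j : nat) (alpha : 'I_j -> nat) : Prop :=
  (forall k, (1 <= alpha k <= 2 * m)%N) /\ (\sum_(k < j) alpha k)%N = (2 * m)%N.

Definition inA (m j : nat) (alpha : 'I_j -> nat) : bool :=
  [forall k, (alpha k == 1%N) || (alpha k == 2%N)] &&
  (#|[pred k | alpha k == 2%N]| == (2 * m - j)%N).

Definition S (m j : nat) (alpha : 'I_j -> nat) (n : nat) : R :=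
  (n%:R ^+ m)^-1 *
  \sum_(i : {ffun 'I_j -> 'I_n} | injectiveb i)
     \prod_(k < j) (cos (2 * PI * ((i k).+1)%:R / n%:R)) ^+ alpha k.

Definition Aconst (m j : nat) : R :=
  (-1) ^+ (j - m) * ((2 * (j - m))`!)%:R / ((2 ^ j * (j - m)`!)%N)%:R.

(* Main.v *)
Require Import Defs.
From Stdlib Require Import Reals.
From mathcomp Require Import all_boot all_order all_algebra.
From mathcomp Require Import Rstruct.
From mathcomp Require Import ring lra zify.
Import Order.TTheory GRing.Theory Num.Theory.
Local Open Scope ring_scope.

Lemma IZR2 : IZR 2 = 2.
Proof. rewrite IZRposE /= RplusE; exact: (natrD R 1 1). Qed.

Lemma PI_gt0 : 0 < PI.
Proof. by apply/RltP; exact PI_RGT_0. Qed.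

Lemma sin_period' x (k : nat) : sin (x + 2 * k%:R * PI) = sin x.
Proof. by rewrite -(sin_period x k) INRE RmultE IZR2. Qed.

Definition theta (r n x : nat) := r%:R * (2 * PI * x.+1%:R / n%:R).

Lemma thetaE r n x : theta r n x = x.+1%:R * (2 * PI * r%:R / n%:R).
Proof. rewrite /theta; ring. Qed.

Lemma hE (r n x : nat) : x%:R * (2 * PI * r%:R / n%:R) + PI * r%:R / n%:R =
   x.+1%:R * (2 * PI * r%:R / n%:R) + - (PI * r%:R / n%:R).
Proof. rewrite mulrSr; ring. Qed.

Lemma nE (r n : nat) : (n%:R : R) != 0 -> n%:R * (2 * PI * r%:R / n%:R) + PI * r%:R / n%:R =
   PI * r%:R / n%:R + 2 * r%:R * PI.
Proof. by move=> hn; field. Qed.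

Lemma cos_sum0 (n r : nat) : (0 < r < n)%N ->
  \sum_(x < n) cos (theta r n x) = 0.
Proof.
move=> /andP[r0 rn].
have n0 : (n%:R : R) != 0 by rewrite pnatr_eq0 -lt0n (leq_trans r0 (ltnW rn)).
set phi := 2 * PI * r%:R / n%:R.
set h := PI * r%:R / n%:R.
have hpos : 0 < sin h.
  have n0' : (0 < n)%N by rewrite (leq_trans r0 (ltnW rn)).
  apply/RltP; apply: sin_gt_0; apply/RltP.
    apply: divr_gt0; last by rewrite ltr0n.
    by apply: mulr_gt0; [exact: PI_gt0 | rewrite ltr0n].
  rewrite /h ltr_pdivrMr ?ltr0n //.
  by rewrite ltr_pM2l ?PI_gt0 // ltr_nat.
set u := fun i : nat => sin (i%:R * phi + h).
have key : forall x : nat, 2 * sin h * cos (theta r n x) = u x.+1 - u x.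
  move=> x.
  have -> : u x = sin (x.+1%:R * phi + - h) by rewrite /u /phi /h ?RplusE ?RmultE hE.
  rewrite /u thetaE -/phi ?RplusE ?RmultE (sinD _ h) (sinD _ (-h)) sin_neg cos_neg ?RoppE; ring.
have : 2 * sin h * \sum_(x < n) cos (theta r n x) = 0.
  rewrite mulr_sumr (eq_bigr (fun x : 'I_n => u x.+1 - u x)); last by move=> x _; exact: key.
  rewrite -(big_mkord xpredT (fun x => u x.+1 - u x)) telescope_sumr // /u.
  rewrite ?RplusE ?RmultE /phi /h nE //.
  by rewrite sin_period' mul0r add0r subrr.
move/eqP; rewrite mulf_eq0 => /orP[|/eqP //].
by rewrite mulf_eq0 pnatr_eq0 /= => /eqP hz; move: hpos; rewrite hz ltxx.
Qed.

Definition cc (n : nat) (x : 'I_n) : R := cos (2 * PI * (x.+1)%:R / n%:R).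

Lemma cc_theta1 n (x : 'I_n) : cc n x = cos (theta 1 n x).
Proof. rewrite /cc /theta; congr cos; rewrite ?RdivE /Rdiv ?RmultE ?RinvE IZR2; ring. Qed.

Lemma cc_theta2 n (x : 'I_n) : cos (theta 2 n x) = 2 * cc n x ^+ 2 - 1.
Proof.
have -> : theta 2 n x = Rmult (IZR 2) (2 * PI * (x.+1)%:R / n%:R)%R.
  by rewrite /theta ?RdivE /Rdiv ?RmultE ?RinvE IZR2; ring.
rewrite cos_2a_cos /cc RminusE !RmultE IZR2 R1E; ring.
Qed.

Lemma P1 n : (1 < n)%N -> \sum_(x < n) cc n x = 0.
Proof.
move=> hn; rewrite (eq_bigr _ (fun x _ => cc_theta1 n x)); apply: cos_sum0; by rewrite hn.
Qed.

Lemma P2 n : (2 < n)%N -> \sum_(x < n) cc n x ^+ 2 = n%:R / 2.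
Proof.
move=> hn.
have e : forall x : 'I_n, cc n x ^+ 2 = (1 + cos (theta 2 n x)) / 2.
  by move=> x; rewrite cc_theta2; field.
rewrite (eq_bigr _ (fun x _ => e x)) -mulr_suml big_split /= cos_sum0 ?hn //.
by rewrite addr0 sumr_const card_ord.
Qed.

Lemma cc_norm n (x : 'I_n) : `|cc n x| <= 1.
Proof.
rewrite ler_norml; have [h1 h2] := COS_bound (2 * PI * (x.+1)%:R / n%:R)%R.
by apply/andP; split; apply/RleP; rewrite /cc ?R1E ?RoppE.
Qed.

Lemma Pbound n a : `|\sum_(x < n) cc n x ^+ a| <= n%:R.
Proof.
apply: le_trans (ler_norm_sum _ _ _) _.
have -> : (n%:R : R) = \sum_(x < n) 1 by rewrite sumr_const card_ord.
apply: ler_sum => x _; rewrite normrX; apply: exprn_ile1 => //; exact: cc_norm.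
Qed.
Definition T (n j : nat) (f : 'I_j -> 'I_n -> R) :=
  \sum_(i : {ffun 'I_j -> 'I_n} | injectiveb i) \prod_(k < j) f k (i k).

Arguments T {n j} f.

Lemma eq_T n j (f g : 'I_j -> 'I_n -> R) : (forall k x, f k x = g k x) -> T f = T g.
Proof. by move=> e; apply: eq_bigr => i _; apply: eq_bigr => k _; rewrite e. Qed.

Definition ext n j (g : {ffun 'I_j -> 'I_n}) (x : 'I_n) : {ffun 'I_j.+1 -> 'I_n} :=
  [ffun k => if unlift ord0 k is Some k' then g k' else x].

Definition spl n j (i : {ffun 'I_j.+1 -> 'I_n}) : {ffun 'I_j -> 'I_n} * 'I_n :=
  ([ffun k => i (lift ord0 k)], i ord0).

Arguments ext {n j} g x.
Arguments spl {n j} i.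

Lemma ext0 n j g x : @ext n j g x ord0 = x.
Proof. by rewrite ffunE unlift_none. Qed.

Lemma extS n j g x k : @ext n j g x (lift ord0 k) = g k.
Proof. by rewrite ffunE liftK. Qed.

Lemma ext_bij n j : bijective (fun p : {ffun 'I_j -> 'I_n} * 'I_n => ext p.1 p.2).
Proof.
exists (@spl n j).
  case=> g x; rewrite /spl ext0; congr (_, _); apply/ffunP => k.
  by rewrite ffunE extS.
move=> i; apply/ffunP => k; rewrite /spl /=.
case: (unliftP ord0 k) => [k'|] ->; by rewrite ?ext0 ?extS ?ffunE.
Qed.

Lemma inj_ext n j g x :
  injectiveb (@ext n j g x) = injectiveb g && [forall k, g k != x].
Proof.
apply/idP/idP.
  move/injectiveP=> hi; apply/andP; split.
    apply/injectiveP => k1 k2 e.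
    by apply: (@lift_inj _ ord0); apply: hi; rewrite !extS.
  apply/forallP => k; apply/negP => /eqP e.
  have := hi (lift ord0 k) ord0; rewrite extS ext0 => /(_ e) h.
  by move: (neq_lift ord0 k); rewrite h eqxx.
case/andP => /injectiveP hi /forallP hx; apply/injectiveP => k1 k2.
case: (unliftP ord0 k1) => [k1'|] ->; case: (unliftP ord0 k2) => [k2'|] ->;
  rewrite ?ext0 ?extS //.
- by move/hi ->.
- by move=> e; move: (hx k1'); rewrite e eqxx.
- by move=> e; move: (hx k2'); rewrite e eqxx.
Qed.

Lemma sum_avoid n j (g : {ffun 'I_j -> 'I_n}) (F : 'I_n -> R) : injectiveb g ->
  \sum_(x | [forall k, g k != x]) F x = \sum_x F x - \sum_(k < j) F (g k).
Proof.
move/injectiveP=> hi.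
rewrite (bigID (fun x => x \in [set g k | k in [set: 'I_j]]) xpredT) /=.
rewrite big_imset /=; last by move=> a b _ _; apply: hi.
have -> : \sum_(i in [set: 'I_j]) F (g i) = \sum_(k < j) F (g k).
  by apply: eq_bigl => k; rewrite in_setT.
rewrite [X in X - _]addrC addrK; apply: eq_bigl => x /=.
apply/forallP/negP.
  by move=> h /imsetP [k _ e]; move: (h k); rewrite e eqxx.
move=> h k; apply/negP => /eqP e; apply: h; apply/imsetP; exists k; [by rewrite inE | by rewrite e].
Qed.

Lemma Trec n j (f : 'I_j.+1 -> 'I_n -> R) :
  T f = T (fun k => f (lift ord0 k)) * \sum_x f ord0 x
        - \sum_(k < j) T (fun k' x => f (lift ord0 k') x * (if k' == k then f ord0 x else 1)).
Proof.
rewrite /T (reindex _ (onW_bij _ (@ext_bij n j))) /=.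
set F := fun k x => \prod_(k0 < j.+1) f k0 (ext k x k0).
have -> : \sum_(p | injectiveb (ext p.1 p.2)) F p.1 p.2 =
   \sum_(g : {ffun 'I_j -> 'I_n} | injectiveb g) \sum_(x | [forall k, g k != x]) F g x.
  by rewrite pair_big_dep; apply: eq_bigl => p; rewrite inj_ext.
rewrite big_mkcond /= mulr_suml exchange_big /=.
rewrite [X in _ - X]big_mkcond [X in X - _]big_mkcond /= -sumrB; apply: eq_bigr => g _.
case: ifP => hg; last by rewrite subrr.
rewrite (eq_bigr (fun x => f ord0 x * \prod_(k < j) f (lift ord0 k) (g k))); last first.
  by move=> x _; rewrite /F big_ord_recl ext0; congr (_ * _); apply: eq_bigr => k _; rewrite extS.
rewrite -mulr_suml sum_avoid // mulrBl mulrC; congr (_ - _).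
rewrite mulr_suml; apply: eq_bigr => k _.
rewrite big_split /= mulrC; congr (_ * _).
by rewrite (bigD1 k) //= eqxx big1 ?mulr1 // => k' /negbTE ->.
Qed.

Definition cnt (P : pred nat) j (al : 'I_j -> nat) : nat := (\sum_(k < j) P (al k))%N.
Arguments cnt P {j} al.
Definition ones j (al : 'I_j -> nat) := cnt (fun x => x == 1%N) al.
Arguments ones {j} al.
Definition bad j (al : 'I_j -> nat) := cnt (fun x => (x != 1%N) && (x != 2%N)) al.
Arguments bad {j} al.
Definition sm j (al : 'I_j -> nat) : nat := (\sum_(k < j) al k)%N.

Arguments sm {j} al.

Fixpoint D (t : nat) :=
  match t return R with 0 => 1 | 1 => 0 | (u.+1 as t').+1 => - t'%:R * D u end.

Definition L j (al : 'I_j -> nat) :=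
  (if bad al == 0%N then D (ones al) else 0) / 2 ^+ (sm al)./2.

Arguments L {j} al.

Definition upd j (be : 'I_j -> nat) (k : 'I_j) (a : nat) :=
  fun k' => (be k' + (if k' == k then a else 0))%N.

Arguments upd {j} be k a.

Lemma cnt_upd P j be k a :
  (cnt P (@upd j be k a) + P (be k) = cnt P be + P (be k + a))%N.
Proof.
rewrite /cnt (bigD1 k) //= (bigD1 k erefl) /= /upd eqxx.
under eq_bigr => i hi do rewrite (negbTE hi) addn0.
lia.
Qed.

Lemma sm_upd j be k a : sm (@upd j be k a) = (sm be + a)%N.
Proof.
rewrite /sm /upd big_split /=; congr (_ + _)%N.
by rewrite (bigD1 k) //= eqxx big1 ?addn0 // => k' /negbTE ->.
Qed.

Lemma cnt_rec P j (al : 'I_j.+1 -> nat) :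
  cnt P al = (P (al ord0) + cnt P (fun k => al (lift ord0 k)))%N.
Proof. by rewrite /cnt big_ord_recl. Qed.

Lemma sm_rec j (al : 'I_j.+1 -> nat) :
  sm al = (al ord0 + sm (fun k => al (lift ord0 k)))%N.
Proof. by rewrite /sm big_ord_recl. Qed.

Lemma D_rec t : D t.+1 + t%:R * D t.-1 = 0.
Proof. case: t => [|t] /=; first by rewrite mul0r addr0. by rewrite mulNr addNr. Qed.

Lemma two_pow_neq0 k : (2%:R : R) ^+ k != 0.
Proof. by rewrite expf_neq0 // pnatr_eq0. Qed.

Lemma cnt_pos (P : pred nat) j (al : 'I_j -> nat) k : P (al k) -> (0 < cnt P al)%N.
Proof. by move=> h; rewrite /cnt (bigD1 k) //= h. Qed.

Lemma L_upd_ge2 j be k a : (2 < be k + a)%N -> L (@upd j be k a) = 0.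
Proof.
move=> ha; rewrite /L /bad.
have := @cnt_pos (fun x => (x != 1%N) && (x != 2%N)) j (upd be k a) k.
rewrite /upd eqxx /=.
have -> : ((be k + a != 1%N) && (be k + a != 2%N)) = true by apply/andP; split; apply/eqP; lia.
move=> /(_ erefl).
case: ifP => [/eqP ->|]; last by rewrite mul0r.
by [].
Qed.

Lemma L_ge3 j (al : 'I_j.+1 -> nat) : (3 <= al ord0)%N -> L al = 0.
Proof.
move=> h; rewrite /L /bad cnt_rec.
have -> : ((al ord0 != 1%N) && (al ord0 != 2%N)) = true by apply/andP; split; apply/eqP; lia.
by rewrite /= mul0r.
Qed.

Lemma L_two j (al : 'I_j.+1 -> nat) (N : R) : al ord0 = 2%N ->
  L al * N ^+ (sm al)./2 = L (fun k => al (lift ord0 k)) * N ^+ (sm (fun k => al (lift ord0 k)))./2 * N / 2.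
Proof.
move=> h; rewrite /L /bad /ones !cnt_rec sm_rec h /= add0n.
rewrite !add0n.
have h2 := two_pow_neq0 (sm (fun k : 'I_j => al (lift ord0 k)))./2.
rewrite !exprS; field.
exact: h2.
Qed.

Lemma L_one j (al : 'I_j.+1 -> nat) : al ord0 = 1%N ->
  (forall k, 0 < al k)%N ->
  L al + \sum_(k < j) L (upd (fun k => al (lift ord0 k)) k 1%N) = 0.
Proof.
move=> h hpos.
set be := fun k => al (lift ord0 k).
set X := (if bad be == 0%N then D (ones be).-1 else 0) / 2 ^+ (sm be).+1./2.
have e : forall k, L (upd be k 1%N) = (be k == 1%N)%:R * X.
  move=> k; case: eqP => hk.
    rewrite mul1r /L /X sm_upd addn1.
    have hb := @cnt_upd (fun x => (x != 1%N) && (x != 2%N)) j be k 1%N.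
    have ho := @cnt_upd (fun x => (x == 1%N)) j be k 1%N.
    rewrite hk /= in hb ho.
    rewrite !addn0 in hb ho.
    by rewrite /bad /ones hb -ho addn1.
  rewrite mul0r L_upd_ge2 //.
  have := hpos (lift ord0 k); rewrite -/(be k); lia.
rewrite (eq_bigr _ (fun k _ => e k)) -mulr_suml -natr_sum.
have hb : bad al = bad be by rewrite /bad cnt_rec h.
have ho : ones al = (ones be).+1 by rewrite /ones cnt_rec h.
have hs : sm al = (sm be).+1 by rewrite sm_rec h.
have hc : (\sum_(i < j) (be i == 1%N))%N = ones be by [].
rewrite hc /L hb ho hs /X.
case: eqP => _; last by rewrite !mul0r mulr0 addr0.
have := D_rec (ones be).
move=> hD.
rewrite mulrA -mulrDl hD mul0r //.
Qed.


Definition Fa n j (al : 'I_j -> nat) := fun (k : 'I_j) (x : 'I_n) => cc n x ^+ al k.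
Arguments Fa n {j} al.

Definition Bnd j (al : 'I_j -> nat) (K : R) (N : nat) := forall n : nat, (N <= n)%N ->
  n%:R * `|T (Fa n al) - L al * n%:R ^+ (sm al)./2| <= K * n%:R ^+ (sm al).+1./2.
Arguments Bnd {j} al K N.

Lemma uphalf_le s : ((s.+1)./2 <= (s./2).+1)%N.
Proof. rewrite /= uphalf_half; case: (odd s) => /=; lia. Qed.

Lemma Bnd_T j (al : 'I_j -> nat) K N n : Bnd al K N -> (N <= n)%N -> (0 < n)%N ->
  `|T (Fa n al)| <= (`|L al| + K) * n%:R ^+ (sm al)./2.
Proof.
move=> hB hN hn; have := hB n hN.
set X := T _ - _; set s := sm al => h.
have N1 : 1 <= (n%:R : R) by rewrite ler1n.
have Np : 0 < (n%:R : R) by rewrite ltr0n.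
have hK : 0 <= K.
  have h0 : 0 <= K * n%:R ^+ s.+1./2 by apply: le_trans h; rewrite mulr_ge0 // ler0n.
  by move: h0; rewrite pmulr_lge0 // exprn_gt0.
have hX : `|X| <= K * n%:R ^+ s./2.
  have : n%:R * `|X| <= n%:R * (K * n%:R ^+ s./2).
    apply: le_trans h _.
    rewrite mulrCA -exprS ler_wpM2l //; apply: ler_weXn2l => //; exact: uphalf_le.
  by rewrite ler_pM2l.
have -> : T (Fa n al) = X + L al * n%:R ^+ s./2 by rewrite /X subrK.
apply: le_trans (ler_normD _ _) _.
rewrite normrM normrX [`|n%:R|]ger0_norm ?ler0n // mulrDl addrC; apply: lerD => //.
Qed.

Lemma core_ineq (J : nat) (nn B P LA E K0 F : R) (TG LG KG : 'I_J -> R) :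
  0 <= nn -> nn * `|B * P - (LA + \sum_k LG k) * E| <= K0 * F ->
  (forall k, nn * `|TG k - LG k * E| <= KG k * F) ->
  nn * `|(B * P - \sum_k TG k) - LA * E| <= (K0 + \sum_k KG k) * F.
Proof.
move=> hn h1 h2.
have -> : (B * P - \sum_k TG k) - LA * E =
   (B * P - (LA + \sum_k LG k) * E) - \sum_k (TG k - LG k * E).
  by rewrite sumrB mulrDl mulr_suml; ring.
apply: le_trans (_ : nn * (`|B * P - (LA + \sum_k LG k) * E| + \sum_k `|TG k - LG k * E|) <= _).
  apply: ler_wpM2l => //; apply: le_trans (ler_normB _ _) _; rewrite lerD2l.
  exact: ler_norm_sum.
rewrite mulrDr [X in _ <= X]mulrDl; apply: lerD => //; rewrite mulr_sumr mulr_suml; apply: ler_sum => k _; exact: h2.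
Qed.

Lemma T0 n (al : 'I_0 -> nat) : T (Fa n al) = 1.
Proof.
rewrite /T (eq_bigl xpredT); last by move=> i; apply/injectiveP => -[].
rewrite (eq_bigr (fun _ => 1)); last by move=> i _; rewrite big_ord0.
by rewrite sumr_const card_ffun !card_ord expn0.
Qed.

Lemma L0 (al : 'I_0 -> nat) : L al = 1.
Proof. by rewrite /L /bad /ones /cnt /sm !big_ord0 /= expr0 divr1. Qed.

Lemma sm0 (al : 'I_0 -> nat) : sm al = 0%N.
Proof. by rewrite /sm big_ord0. Qed.

Lemma Trec' n j (al : 'I_j.+1 -> nat) :
  T (Fa n al) = T (Fa n (fun k => al (lift ord0 k))) * (\sum_x cc n x ^+ al ord0)
     - \sum_(k < j) T (Fa n (upd (fun k => al (lift ord0 k)) k (al ord0))).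
Proof.
rewrite Trec; congr (_ - _); apply: eq_bigr => k _; apply: eq_T => k' x.
rewrite /Fa /upd; case: eqP => _; by rewrite ?exprD ?addn0 ?mulr1.
Qed.

Lemma claim j : forall al : 'I_j -> nat, (forall k, 0 < al k)%N -> exists K N, Bnd al K N.
Proof.
elim: j => [|j IH] al hpos.
  exists 0, 0%N => n _; rewrite T0 L0 sm0 expr0 mulr1 subrr normr0 mulr0 mul0r //.
set a := al ord0; set be := fun k => al (lift ord0 k).
have hbe : forall k, (0 < be k)%N by move=> k; exact: hpos.
have ha : (0 < a)%N by exact: hpos.
have [Kb [Nb hB]] := IH be hbe.
have : forall k : 'I_j, exists p : R * nat, Bnd (upd be k a) p.1 p.2.
  move=> k; have [K [N h]] := IH (upd be k a) (fun k' => ltn_addr _ (hbe k')).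
  by exists (K, N).
case/fin_all_exists => KN hKN.
have hsm : forall k, sm (upd be k a) = sm al by move=> k; rewrite sm_upd sm_rec addnC.
have hsa : sm al = (a + sm be)%N by rewrite sm_rec.
set Nm := (\sum_k (KN k).2)%N.
suff [K0 [N0 h0]] : exists K0 N0, forall n, (N0 <= n)%N ->
   n%:R * `|T (Fa n be) * (\sum_x cc n x ^+ a) - (L al + \sum_k L (upd be k a)) * n%:R ^+ (sm al)./2|
      <= K0 * n%:R ^+ (sm al).+1./2.
  exists (K0 + \sum_k (KN k).1), (maxn N0 Nm) => n hn.
  rewrite Trec' -/a -/be; apply: core_ineq; first exact: ler0n.
    by apply: h0; apply: leq_trans hn; apply: leq_maxl.
  move=> k; rewrite -(hsm k); apply: hKN.
  apply: leq_trans hn; apply: leq_trans (leq_maxr N0 Nm); rewrite /Nm.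
  by rewrite (bigD1 k) //= leq_addr.
have hLG2 : (2 <= a)%N -> \sum_k L (upd be k a) = 0.
  by move=> h2; apply: big1 => k _; apply: L_upd_ge2; have := hbe k; lia.
case: (ltngtP a 2) => ha2.
-
  have ea : a = 1%N by lia.
  exists 0, 2%N => n hn.
  rewrite ea; have -> : \sum_(x < n) cc n x ^+ 1 = 0 by exact: P1.
  rewrite mulr0.
  have := @L_one j al ea hpos; rewrite -/be => ->.
  by rewrite mul0r subrr normr0 !mulr0 mul0r.
-
  exists (`|L be| + Kb), (maxn Nb 1) => n hn.
  have hnb : (Nb <= n)%N by apply: leq_trans hn; apply: leq_maxl.
  have hn1 : (0 < n)%N by apply: leq_trans hn; apply: leq_maxr.
  have hT := @Bnd_T _ be Kb Nb n hB hnb hn1.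
  have Np : 0 < (n%:R : R) by rewrite ltr0n.
  have N1 : 1 <= (n%:R : R) by rewrite ler1n.
  have hC : 0 <= `|L be| + Kb.
    have : 0 <= (`|L be| + Kb) * n%:R ^+ (sm be)./2 by apply: le_trans hT.
    by rewrite pmulr_lge0 // exprn_gt0.
  rewrite L_ge3 // hLG2 ?(ltnW ha2) // addr0 mul0r subr0 normrM.
  apply: le_trans (_ : n%:R * ((`|L be| + Kb) * n%:R ^+ (sm be)./2 * n%:R) <= _).
    by apply: ler_wpM2l; [exact: ler0n | apply: ler_pM => //; exact: Pbound].
  have -> : n%:R * ((`|L be| + Kb) * n%:R ^+ (sm be)./2 * n%:R) =
      (`|L be| + Kb) * n%:R ^+ ((sm be)./2).+2 by rewrite !exprS; ring.
  apply: ler_wpM2l => //.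
  apply: ler_weXn2l => //; rewrite hsa.
  have : ((sm be).+4./2 <= (a + sm be).+1./2)%N by apply: half_leq; lia.
  by [].
-
  exists (Kb / 2), (maxn Nb 3) => n hn.
  have hnb : (Nb <= n)%N by apply: leq_trans hn; apply: leq_maxl.
  have hn3 : (2 < n)%N by apply: leq_trans hn; apply: leq_maxr.
  have := hB n hnb.
  rewrite hLG2; last by rewrite ha2.
  rewrite addr0 (@L_two j al _ ha2) -/be ha2 P2 //.
  set Y := T (Fa n be) - L be * n%:R ^+ (sm be)./2 => hY.
  have -> : T (Fa n be) * (n%:R / 2) - L be * n%:R ^+ (sm be)./2 * n%:R / 2 = Y * (n%:R / 2).
    by rewrite /Y; ring.
  rewrite normrM [`|n%:R / 2|]ger0_norm ?divr_ge0 ?ler0n // hsa ha2.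
  have -> : (2 + sm be).+1./2 = ((sm be).+1./2).+1 by rewrite add2n.
  rewrite exprS mulrA; apply: le_trans (_ : Kb * n%:R ^+ (sm be).+1./2 * (n%:R / 2) <= _).
    by rewrite mulrA ler_wpM2r ?divr_ge0 ?ler0n.
  by rewrite le_eqVlt; apply/orP; left; apply/eqP; ring.
Qed.

Lemma D_even u : D u.*2 = (-1) ^+ u * (u.*2)`!%:R / (2 ^+ u * u`!%:R).
Proof.
elim: u => [|u IH].
  by rewrite /= !expr0 !mul1r mulr1n invr1.
have h1 : (2 : R) ^+ u != 0 by exact: two_pow_neq0.
have h2 : (u`!%:R : R) != 0 by rewrite pnatr_eq0 -lt0n fact_gt0.
have h3 : ((u.*2)`!%:R : R) != 0 by rewrite pnatr_eq0 -lt0n fact_gt0.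
rewrite doubleS [D _]/= IH !factS !natrM !exprS -addnn.
rewrite -addnn in h3.
field.
by rewrite h2 nat1r pnatr_eq0 two_pow_neq0.
Qed.

Lemma cnt_card (P : pred nat) j (al : 'I_j -> nat) : cnt P al = #|[pred k | P (al k)]|.
Proof.
rewrite /cnt -sum1_card [RHS]big_mkcond /=; apply: eq_bigr => k _.
by rewrite inE; case: (P (al k)).
Qed.

Lemma bad0P j (al : 'I_j -> nat) :
  (bad al == 0%N) = [forall k, (al k == 1%N) || (al k == 2%N)].
Proof.
apply/eqP/forallP.
  move=> h k; apply/negPn/negP => hk.
  have hp : (0 < bad al)%N by apply: (@cnt_pos _ j al k); rewrite /= -negb_or.
  by rewrite h in hp.
move=> h; rewrite /bad /cnt; apply: big1 => k _.
by move: (h k); case/orP => /eqP ->.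
Qed.

Lemma decomp j (al : 'I_j -> nat) : bad al = 0%N ->
  sm al = (ones al + 2 * cnt (fun x => x == 2%N) al)%N /\
  j = (ones al + cnt (fun x => x == 2%N) al)%N.
Proof.
move/eqP; rewrite bad0P => /forallP h; split.
  rewrite /sm /ones /cnt big_distrr /= -big_split /=; apply: eq_bigr => k _.
  by move: (h k); case/orP => /eqP ->.
rewrite /ones /cnt -big_split /= -{1}(card_ord j) -sum1_card; apply: eq_bigr => k _.
by move: (h k); case/orP => /eqP ->.
Qed.

Lemma AconstE m j : (m <= j)%N ->
  Aconst m j = (-1) ^+ (j - m) * ((j - m).*2)`!%:R / (2 ^+ j * (j - m)`!%:R).
Proof.
move=> h; rewrite /Aconst /Rdiv ?RmultE ?RinvE natrM natrX -muln2 mulnC.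
by [].
Qed.

Lemma L_A m j (al : 'I_j -> nat) : (m <= j <= 2 * m)%N -> admissible m j al -> inA m j al ->
  L al = Aconst m j.
Proof.
move=> /andP[h1 h2] [hpos hs] /andP[hf /eqP hc].
have hb : bad al = 0%N by apply/eqP; rewrite bad0P.
have [e1 e2] := @decomp j al hb.
rewrite -(@cnt_card (fun x => x == 2%N) j al) in hc.
have hsm : sm al = (2 * m)%N by rewrite /sm hs.
have ho : ones al = (j - m).*2 by lia.
rewrite /L hb eqxx ho hsm D_even AconstE //.
have -> : (2 * m)./2 = m by rewrite mul2n doubleK.
have -> : j = ((j - m) + m)%N by lia.
rewrite addnK exprD.
have hx := two_pow_neq0 m.
have hy := two_pow_neq0 (j - m).
have hz : ((j - m)`!%:R : R) != 0 by rewrite pnatr_eq0 -lt0n fact_gt0.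
field.
by rewrite hx hy hz.
Qed.

Lemma Aconst_neq0 m j : (m <= j)%N -> Aconst m j != 0.
Proof.
move=> h; rewrite AconstE // !mulf_neq0 ?invr_eq0 ?mulf_neq0 ?expf_neq0 ?oppr_eq0 ?oner_neq0 //.
- by rewrite pnatr_eq0 -lt0n fact_gt0.
- by rewrite pnatr_eq0.
- by rewrite pnatr_eq0 -lt0n fact_gt0.
Qed.

Lemma L_notA m j (al : 'I_j -> nat) : (m <= j <= 2 * m)%N -> admissible m j al -> ~~ inA m j al ->
  L al = 0.
Proof.
move=> /andP[h1 h2] [hpos hs] hn.
rewrite /L; case: eqP => hb; last by rewrite mul0r.
have [e1 e2] := @decomp j al hb.
have hsm : sm al = (2 * m)%N by rewrite /sm hs.
exfalso; move: hn; rewrite /inA.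
have -> : [forall k, (al k == 1%N) || (al k == 2%N)] by rewrite -bad0P hb.
rewrite /= -(@cnt_card (fun x => x == 2%N) j al); apply/negPn/eqP; lia.
Qed.


Theorem lemma3 (m j : nat) (hmj : (m <= j <= 2 * m)%N)
  (alpha : 'I_j -> nat) (hadm : admissible m j alpha) :
  (inA m j alpha ->
     exists (C : R) (N : nat), forall n : nat, (N <= n)%N ->
       exists e : R, `|e| <= C / n%:R /\ S m j alpha n = Aconst m j * (1 + e))
  /\
  (~~ inA m j alpha ->
     exists (C : R) (N : nat), forall n : nat, (N <= n)%N ->
       `|S m j alpha n| <= C / n%:R).
Proof.
have hpos : forall k, (0 < alpha k)%N by move=> k; case/andP: (hadm.1 k).
have [K [N hB]] := @claim j alpha hpos.
have hsm : sm alpha = (2 * m)%N by rewrite /sm hadm.2.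
have key : forall n, (maxn N 1 <= n)%N -> `|S m j alpha n - L alpha| <= K / n%:R.
  move=> n hn.
  have hnN : (N <= n)%N by apply: leq_trans hn; apply: leq_maxl.
  have hn1 : (0 < n)%N by apply: leq_trans hn; apply: leq_maxr.
  have Np : 0 < (n%:R : R) by rewrite ltr0n.
  have Nm : 0 < (n%:R : R) ^+ m by rewrite exprn_gt0.
  have := hB n hnN; rewrite hsm.
  have -> : (2 * m)./2 = m by rewrite mul2n doubleK.
  have -> : (2 * m).+1./2 = m by rewrite mul2n /= uphalf_double.
  set X := T _ - _ => hX.
  have SE : S m j alpha n = (n%:R ^+ m)^-1 * T (Fa n alpha) by [].
  have -> : S m j alpha n - L alpha = X / n%:R ^+ m.
    rewrite SE /X; field; by rewrite lt0r_neq0.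
  rewrite normrM normfV [`|n%:R ^+ m|]ger0_norm; last exact: ltW.
  rewrite ler_pdivrMr //.
  rewrite mulrAC ler_pdivlMr // mulrC; exact: hX.
split.
- move=> hA.
  have LA := @L_A m j alpha hmj hadm hA.
  have A0 := @Aconst_neq0 m j (proj1 (andP hmj)).
  exists (K / `|Aconst m j|), (maxn N 1) => n hn.
  exists ((S m j alpha n - Aconst m j) / Aconst m j); split.
    rewrite normrM normfV mulrAC ler_pM2r ?invr_gt0 ?normr_gt0 //.
    by rewrite -LA; exact: key.
  by field.
- move=> hnA; exists K, (maxn N 1) => n hn.
  by have := key n hn; rewrite (@L_notA m j alpha hmj hadm hnA) subr0.
Qed.
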